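(* Let $G\rightrightarrows X$ be a locally compact groupoid, $A\to X$ a Banach algebra $G$-bundle, $E\to X$ a Banach $A$-module bundle, $\sigma$ an $A$-valued multiplier for $G$, and $T:s^*E\to t^*E$ an $A$-linear almost $\sigma$-representation. Then $T$ is an invertible morphism of Banach bundles over $G$ (i.e. each $T(g)$ is invertible and $g\mapsto T(g)^{-1}$ defines a morphism $t^*E\to s^*E$ covering $\mathrm{id}_G$), and for all $g\in G$ $$\|T(g)^{-1}\|\le\frac{b(T,tg)}{1-r(T,tg)}.$$
   Context: A locally compact groupoid is a topological groupoid $G\rightrightarrows X$ (source $s$, target $t$, units $1x$, composable pairs $G\times_{s,t}G=\{(g,h):sg=th\}$) whose arrow space is locally compact Hausdorff, equipped with a continuous left Haar system $\{\mu^x\}_{x\in X}$: each $\mu^x$ is a Radon measure on $G$ with support $G^x=t^{-1}(x)$, $\int\varphi(gh)\,d\mu^{sg}(h)=\int\varphi(h)\,d\mu^{tg}(h)$ for $g\in G,\varphi\in C_c(G)$, and $x\mapsto\int\varphi\,d\mu^x$ is continuous. $Gx=t(s^{-1}(x))$ is the orbit of $x$. Banach bundle (Fell): Hausdorff space $E$ with continuous open surjection $p:E\to X$, continuous fiberwise vector operations over $\mathbb R$, continuous norm making fibers Banach spaces, such that nets $e_i$ with $pe_i\to x$, $|e_i|\to0$ converge to $0_x$. Morphisms: continuous fiberwise linear maps; pullbacks $s^*E,t^*E$ over $G$ have fibers $E_{sg}$, $E_{tg}$ at $g$. A Banach algebra bundle $A\to X$ is a Banach bundle with continuous fiberwise multiplications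 and a continuous unit section making fibers unital Banach algebras with $|ab|\le|a||b|$, $|1|=1$; $A^\times$ = invertible elements. A Banach $A$-module bundle is a Banach bundle $E\to X$ with a continuous fiberwise bilinear action $A\times_XE\to E$, $|ae|\le|a||e|$, $1e=e$. A Banach algebra $G$-bundle is a Banach algebra bundle with a continuous left action of $G$ by isometric algebra isomorphisms $A_{sg}\to A_{tg}$, $a\mapsto ga$. An $A$-valued multiplier is a continuous $\sigma$ on $G\times_{s,t}G$ with $\sigma(g,h)\in A^\times_{tg}$ central in $A_{tg}$, $\sigma(g,h)=1$ if $g$ or $h$ is a unit, and $\sigma(g,h)\sigma(gh,k)=g\sigma(h,k)\,\sigma(g,hk)$ for composable $g,h,k$. A pseudorepresentation is any morphism $T:s^*E\to t^*E$ covering $\mathrm{id}_G$, i.e. continuously varying bounded operators $T(g):E_{sg}\to E_{tg}$; it is $A$-linear if $T(g)(ae)=ga\cdot T(g)e$. With $\ell(\sigma,g)=\max\{1,|\sigma(g,g^{-1})^{-1}|\}$, the $\sigma$-defect and $\sigma$-bound along the orbit of $x$ are $r(T,x)=\sup_{y\in Gx}\|\mathrm{id}-T(1y)\|+\sup_{g\in t^{-1}(Gx),\,h\in G^{sg}}\ell(\sigma,g)\|\sigma(g,h)T(gh)-T(g)T(h)\|$, $b(T,x)=\sup_{g\in t^{-1}(Gx)}\ell(\sigma,g)\|T(g)\|$ (possibly infinite). $T$ is an almost $\sigma$-representation if $r(T,x)\le\min\{1/4,\,b(T,x)^{-2}/9\}$ for every $x\in X$. *)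

(* Defs.v *)
From mathcomp Require Import all_boot all_order all_algebra.
From mathcomp Require Import all_classical all_reals all_analysis.
Import Order.TTheory GRing.Theory Num.Theory.
Import numFieldNormedType.Exports.

Set Implicit Arguments.
Unset Strict Implicit.
Unset Printing Implicit Defensive.

Local Open Scope classical_set_scope.
Local Open Scope ring_scope.

(* Topological groupoids  G ⇉ X :  source s, target t, units u,            *)
(* multiplication m (meaningful on composable pairs, s g = t h), inverse i. *)

Definition composable (G X : Type) (s t : G -> X) : set (G * G) :=
  [set gh | s gh.1 = t gh.2].

Definition is_topological_groupoid (G X : topologicalType)
  (s t : G -> X) (u : X -> G) (m : G -> G -> G) (i : G -> G) : Prop :=
  [/\ [/\ (forall x, s (u x) = x /\ t (u x) = x) &
          (forall g h, s g = t h -> s (m g h) = s h /\ t (m g h) = t g)],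
      (forall g h k, s g = t h -> s h = t k -> m (m g h) k = m g (m h k)),
      (forall g, m (u (t g)) g = g /\ m g (u (s g)) = g),
      (forall g, [/\ s (i g) = t g, t (i g) = s g,
                     m g (i g) = u (t g) & m (i g) g = u (s g)]) &
      [/\ continuous s, continuous t, continuous u, continuous i &
          {within composable s t, continuous (fun gh => m gh.1 gh.2)}]].

Definition borel (G : ptopologicalType) := g_sigma_algebraType (@open G).

Definition Cc (R : realType) (G : topologicalType) (phi : G -> R) : Prop :=
  continuous phi /\ compact (closure [set g | phi g != 0]).

Definition radon (R : realType) (G : ptopologicalType)
  (mu : {measure set (borel G) -> \bar R}) : Prop :=
  [/\ (forall K : set G, compact K -> (mu K < +oo)%E),
      (forall B : set (borel G), measurable B ->
          mu B = ereal_inf [set mu U | U in [set U : set G | open U /\ B `<=` U]]) &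
      (forall U : set G, open U ->
          mu U = ereal_sup [set mu K | K in [set K : set G | compact K /\ K `<=` U]])].

Definition msupport (R : realType) (G : ptopologicalType)
  (mu : {measure set (borel G) -> \bar R}) : set G :=
  [set g | forall U : set G, open U -> U g -> (0 < mu U)%E].

Definition left_haar_system (R : realType) (G : ptopologicalType) (X : topologicalType)
  (s t : G -> X) (m : G -> G -> G) (mu : X -> {measure set (borel G) -> \bar R}) : Prop :=
  [/\ (forall x, radon (mu x)),
      (forall x, msupport (mu x) = [set g | t g = x]),
      (forall (g : G) (phi : G -> R), Cc phi ->
          (\int[mu (s g)]_(h in [set h : borel G | t h = s g]) (phi (m g h))%:E)%E
          = (\int[mu (t g)]_h (phi h)%:E)%E) &
      (forall phi : G -> R, Cc phi ->
          continuous (fun x : X => fine (\int[mu x]_h (phi h)%:E)%E))].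

Definition locally_compact_groupoid (R : realType) (G : ptopologicalType) (X : topologicalType)
  (s t : G -> X) (u : X -> G) (m : G -> G -> G) (i : G -> G) : Prop :=
  [/\ is_topological_groupoid s t u m i,
      hausdorff_space G, locally_compact [set: G] &
      exists mu : X -> {measure set (borel G) -> \bar R}, left_haar_system s t m mu].

(* Banach bundles (Fell), given by the total space E, projection p, zero    *)
(* section z, fiberwise addition add, scalar multiplication scal, norm nrm. *)

Definition fibered (E X : Type) (p : E -> X) : set (E * E) :=
  [set ee | p ee.1 = p ee.2].

Definition banach_bundle (R : realType) (X E : topologicalType) (p : E -> X)
  (z : X -> E) (add : E -> E -> E) (scal : R -> E -> E) (nrm : E -> R) : Prop :=
  [/\ [/\ hausdorff_space E, continuous p,
          (forall x, exists e, p e = x) &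
          (forall U : set E, open U -> open (p @` U))],
      [/\ (forall x, p (z x) = x),
          (forall e e', p e = p e' -> p (add e e') = p e) &
          (forall c e, p (scal c e) = p e)],
      [/\ {within fibered p, continuous (fun ee => add ee.1 ee.2)},
          continuous (fun ce : R * E => scal ce.1 ce.2) &
          continuous nrm],
      (forall e e' e'', p e = p e' -> p e = p e'' ->
         [/\ add e e' = add e' e, add (add e e') e'' = add e (add e' e''),
             add e (z (p e)) = e, add e (scal (-1) e) = z (p e) &
             [/\ scal 1 e = e,
                 (forall a b, scal a (scal b e) = scal (a * b) e),
                 (forall a b, scal (a + b) e = add (scal a e) (scal b e)) &
                 (forall a, scal a (add e e') = add (scal a e) (scal a e'))]]) &
      [/\ [/\ (forall e, nrm e = 0 -> e = z (p e)),
          (forall c e, nrm (scal c e) = `|c| * nrm e) &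
          (forall e e', p e = p e' -> nrm (add e e') <= nrm e + nrm e')],
      (forall (x : X) (v : nat -> E), (forall n, p (v n) = x) ->
         (forall eps : R, 0 < eps -> exists N : nat, forall n k : nat,
              (N <= n)%N -> (N <= k)%N -> nrm (add (v n) (scal (-1) (v k))) < eps) ->
         exists e, p e = x /\
           ((fun n => nrm (add (v n) (scal (-1) e))) @ \oo --> (0 : R))) &
      (* nets (= proper filters) e_i with p e_i -> x and |e_i| -> 0 converge to 0_x *)
      (forall (F : set_system E) (x : X), ProperFilter F ->
         (p @ F --> x) -> (nrm @ F --> (0 : R)) -> (F --> z x))]].

Definition banach_algebra_bundle (R : realType) (X A : topologicalType) (p : A -> X)
  (z : X -> A) (add : A -> A -> A) (scal : R -> A -> A) (nrm : A -> R)
  (mul : A -> A -> A) (one : X -> A) : Prop :=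
  [/\ banach_bundle p z add scal nrm,
      [/\ (forall a b, p a = p b -> p (mul a b) = p a),
          (forall x, p (one x) = x),
          continuous one &
          {within fibered p, continuous (fun ab => mul ab.1 ab.2)}],
      (forall a b c, p a = p b -> p a = p c ->
         [/\ mul (add a b) c = add (mul a c) (mul b c),
             mul a (add b c) = add (mul a b) (mul a c),
             (forall k, mul (scal k a) b = scal k (mul a b)),
             (forall k, mul a (scal k b) = scal k (mul a b)) &
             mul (mul a b) c = mul a (mul b c)]),
      (forall a, mul (one (p a)) a = a /\ mul a (one (p a)) = a) &
      [/\ (forall a b, p a = p b -> nrm (mul a b) <= nrm a * nrm b) &
          (forall x, nrm (one x) = 1)]].

Definition is_inverse (X A : Type) (p : A -> X) (mul : A -> A -> A) (one : X -> A)
  (a b : A) : Prop :=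
  [/\ p b = p a, mul a b = one (p a) & mul b a = one (p a)].

Definition invertible (X A : Type) (p : A -> X) (mul : A -> A -> A) (one : X -> A)
  (a : A) : Prop := exists b, is_inverse p mul one a b.

(* the inverse a^{-1} (it is unique when it exists) *)
Definition ainv (X : Type) (A : topologicalType) (p : A -> X) (mul : A -> A -> A)
  (one : X -> A) (a : A) : A := xget a [set b | is_inverse p mul one a b].

Definition banach_module_bundle (R : realType) (X A E : topologicalType)
  (pA : A -> X) (addA : A -> A -> A) (scalA : R -> A -> A) (nA : A -> R)
  (mulA : A -> A -> A) (oneA : X -> A)
  (pE : E -> X) (zE : X -> E) (addE : E -> E -> E) (scalE : R -> E -> E) (nE : E -> R)
  (act : A -> E -> E) : Prop :=
  [/\ banach_bundle pE zE addE scalE nE,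
      (forall a e, pA a = pE e -> pE (act a e) = pE e),
      {within [set ae | pA ae.1 = pE ae.2], continuous (fun ae => act ae.1 ae.2)},
      (forall a a' e e', pA a = pE e -> pA a' = pE e -> pE e' = pE e ->
         [/\ act (addA a a') e = addE (act a e) (act a' e),
             act a (addE e e') = addE (act a e) (act a e'),
             (forall k, act (scalA k a) e = scalE k (act a e)),
             (forall k, act a (scalE k e) = scalE k (act a e)) &
             act (mulA a a') e = act a (act a' e)]) &
      [/\ (forall a e, pA a = pE e -> nE (act a e) <= nA a * nE e) &
          (forall e, act (oneA (pE e)) e = e)]].

Definition algebra_G_action (R : realType) (G X A : topologicalType)
  (s t : G -> X) (u : X -> G) (m : G -> G -> G)
  (pA : A -> X) (addA : A -> A -> A) (scalA : R -> A -> A) (nA : A -> R)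
  (mulA : A -> A -> A) (oneA : X -> A) (gact : G -> A -> A) : Prop :=
  [/\ (forall g a, pA a = s g -> pA (gact g a) = t g),
      {within [set ga | s ga.1 = pA ga.2], continuous (fun ga => gact ga.1 ga.2)},
      (forall g a b, pA a = s g -> pA b = s g ->
         [/\ gact g (addA a b) = addA (gact g a) (gact g b),
             (forall k, gact g (scalA k a) = scalA k (gact g a)),
             gact g (mulA a b) = mulA (gact g a) (gact g b),
             gact g (oneA (s g)) = oneA (t g) &
             nA (gact g a) = nA a]),
      (forall g b, pA b = t g -> exists a, pA a = s g /\ gact g a = b) &
      [/\ (forall a, gact (u (pA a)) a = a) &
          (forall g h a, s g = t h -> pA a = s h -> gact (m g h) a = gact g (gact h a))]].

Definition multiplier (G X A : topologicalType)
  (s t : G -> X) (u : X -> G) (m : G -> G -> G)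
  (pA : A -> X) (mulA : A -> A -> A) (oneA : X -> A) (gact : G -> A -> A)
  (sigma : G -> G -> A) : Prop :=
  [/\ {within composable s t, continuous (fun gh => sigma gh.1 gh.2)},
      (forall g h, s g = t h ->
         [/\ pA (sigma g h) = t g, invertible pA mulA oneA (sigma g h) &
             (forall a, pA a = t g -> mulA (sigma g h) a = mulA a (sigma g h))]),
      (forall g h, s g = t h -> ((exists x, g = u x) \/ (exists x, h = u x)) ->
         sigma g h = oneA (t g)) &
      (forall g h k, s g = t h -> s h = t k ->
         mulA (sigma g h) (sigma (m g h) k) = mulA (gact g (sigma h k)) (sigma g (m h k)))].

(* A morphism src^*E -> tgt^*E of Banach bundles over G covering id_G:
   continuously varying bounded linear operators T g : E_{src g} -> E_{tgt g}. *)
Definition pullback_morphism (R : realType) (G X E : topologicalType)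
  (src tgt : G -> X) (pE : E -> X) (addE : E -> E -> E) (scalE : R -> E -> E)
  (nE : E -> R) (T : G -> E -> E) : Prop :=
  [/\ (forall g e, pE e = src g -> pE (T g e) = tgt g),
      (forall g e e', pE e = src g -> pE e' = src g ->
          T g (addE e e') = addE (T g e) (T g e')),
      (forall g k e, pE e = src g -> T g (scalE k e) = scalE k (T g e)),
      (forall g, exists C : R, forall e, pE e = src g -> nE (T g e) <= C * nE e) &
      {within [set ge | src ge.1 = pE ge.2], continuous (fun ge => (ge.1, T ge.1 ge.2))}].

Definition pseudorepresentation (R : realType) (G X E : topologicalType)
  (s t : G -> X) (pE : E -> X) (addE : E -> E -> E) (scalE : R -> E -> E)
  (nE : E -> R) (T : G -> E -> E) : Prop :=
  pullback_morphism s t pE addE scalE nE T.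

Definition A_linear (G X A E : topologicalType) (s : G -> X)
  (pA : A -> X) (pE : E -> X) (act : A -> E -> E) (gact : G -> A -> A)
  (T : G -> E -> E) : Prop :=
  forall g a e, pA a = s g -> pE e = s g -> T g (act a e) = act (gact g a) (T g e).

Definition opnorm (R : realType) (X E : Type) (pE : E -> X) (nE : E -> R)
  (x : X) (L : E -> E) : \bar R :=
  ereal_sup [set (nE (L e))%:E | e in [set e | pE e = x /\ nE e <= 1]].

Definition orbit (G X : Type) (s t : G -> X) (x : X) : set X :=
  [set y | exists k, s k = x /\ t k = y].

Definition ell (R : realType) (G X : Type) (A : topologicalType) (i : G -> G)
  (pA : A -> X) (nA : A -> R) (mulA : A -> A -> A) (oneA : X -> A)
  (sigma : G -> G -> A) (g : G) : R :=
  Num.max 1 (nA (ainv pA mulA oneA (sigma g (i g)))).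

Definition defect (R : realType) (G X A E : topologicalType)
  (s t : G -> X) (u : X -> G) (m : G -> G -> G) (i : G -> G)
  (pA : A -> X) (nA : A -> R) (mulA : A -> A -> A) (oneA : X -> A)
  (pE : E -> X) (addE : E -> E -> E) (scalE : R -> E -> E) (nE : E -> R)
  (act : A -> E -> E) (sigma : G -> G -> A) (T : G -> E -> E) (x : X) : \bar R :=
  (ereal_sup [set opnorm pE nE y (fun e => addE e (scalE (-1)%R (T (u y) e)))
              | y in orbit s t x]
   + ereal_sup [set (ell i pA nA mulA oneA sigma gh.1)%:E *
                    opnorm pE nE (s gh.2)
                      (fun e => addE (act (sigma gh.1 gh.2) (T (m gh.1 gh.2) e))
                                     (scalE (-1)%R (T gh.1 (T gh.2 e))))
              | gh in [set gh : G * G | orbit s t x (t gh.1) /\ t gh.2 = s gh.1]])%E.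

Definition bound (R : realType) (G X A E : topologicalType)
  (s t : G -> X) (i : G -> G)
  (pA : A -> X) (nA : A -> R) (mulA : A -> A -> A) (oneA : X -> A)
  (pE : E -> X) (nE : E -> R) (sigma : G -> G -> A) (T : G -> E -> E) (x : X) : \bar R :=
  ereal_sup [set ((ell i pA nA mulA oneA sigma g)%:E * opnorm pE nE (s g) (T g))%E
             | g in [set g | orbit s t x (t g)]].

(* b^{-2}/9 in \bar R, with the conventions (+oo)^{-2} = 0 and 0^{-2} = +oo *)
Definition inv_sq_div9 (R : realType) (b : \bar R) : \bar R :=
  match b with
  | r%:E => if r == 0 then +oo%E else (r ^- 2 / 9)%:E
  | +oo%E => 0%E
  | -oo%E => +oo%E
  end.

Definition almost_sigma_rep (R : realType) (G X A E : topologicalType)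
  (s t : G -> X) (u : X -> G) (m : G -> G -> G) (i : G -> G)
  (pA : A -> X) (nA : A -> R) (mulA : A -> A -> A) (oneA : X -> A)
  (pE : E -> X) (addE : E -> E -> E) (scalE : R -> E -> E) (nE : E -> R)
  (act : A -> E -> E) (sigma : G -> G -> A) (T : G -> E -> E) : Prop :=
  forall x : X,
    (defect s t u m i pA nA mulA oneA pE addE scalE nE act sigma T x <= (1 / 4 : R)%:E)%E /\
    (defect s t u m i pA nA mulA oneA pE addE scalE nE act sigma T x
       <= inv_sq_div9 (bound s t i pA nA mulA oneA pE nE sigma T x))%E.

(* Main.v *)
Require Import Defs.
From mathcomp Require Import all_boot all_order all_algebra.
From mathcomp Require Import all_classical all_reals all_analysis.
From mathcomp Require Import ring lra.
Import Order.TTheory GRing.Theory Num.Theory.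
Import numFieldNormedType.Exports.
Local Open Scope classical_set_scope.
Local Open Scope ring_scope.

Set Implicit Arguments.
Unset Strict Implicit.
Unset Printing Implicit Defensive.

Lemma cvg_within_app (W : Type) (Y Z : topologicalType) (F : set_system W)
  (FF : Filter F) (D : set Y) (h : Y -> Z) (k : W -> Y) (y0 : Y) :
  {within D, continuous h} -> D y0 -> k w @[w --> F] --> y0 ->
  (\forall w \near F, D (k w)) -> h (k w) @[w --> F] --> h y0.
Proof.
move=> hc Dy0 kc Dk.
have H := (subspace_continuousP D h).1 hc y0 Dy0.
move=> S /H; rewrite /within => /kc HS.
by apply: filterS2 Dk HS => w Dw /(_ Dw).
Qed.

Lemma cvg_cont_app (W : Type) (Y Z : topologicalType) (F : set_system W)
  (FF : Filter F) (h : Y -> Z) (k : W -> Y) (y0 : Y) :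
  continuous h -> k w @[w --> F] --> y0 -> h (k w) @[w --> F] --> h y0.
Proof. by move=> hc kc S /hc /kc. Qed.

Lemma lift_filter (Y : Type) (B Xt : topologicalType) (p : B -> Xt)
  (popen : forall U : set B, open U -> open (p @` U))
  (K : set_system Y) (KF : ProperFilter K) (phi : Y -> Xt) (x : Xt) (b0 : B) :
  phi y @[y --> K] --> x -> p b0 = x ->
  exists K' : set_system (Y * B), [/\ ProperFilter K',
    (forall S, K S -> K' (fst @^-1` S)),
    snd q @[q --> K'] --> b0 & K' [set q | p q.2 = phi q.1]].
Proof.
move=> phic pb0.
have KFF : Filter K := @filter_filter _ K KF.
pose D := fun AV : set Y * set B => K AV.1 /\ nbhs b0 AV.2.
pose Bs := fun AV : set Y * set B =>
  [set q : Y * B | AV.1 q.1 /\ AV.2 q.2 /\ p q.2 = phi q.1].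
have FiF : Filter (filter_from D Bs).
  apply: filter_from_filter.
    by exists (setT, setT); split => //=; [exact: filterT|exact: filterT].
  move=> [A1 V1] [A2 V2] [/= KA1 NV1] [/= KA2 NV2].
  exists (A1 `&` A2, V1 `&` V2); first by split; [exact: filterI|exact: filterI].
  by move=> q [/= [a1 a2] [[v1 v2] pq]]; split; split.
exists (filter_from D Bs); split.
- apply: filter_from_proper => -[A V] [/= KA].
  rewrite nbhsE => -[U [oU Ub0] UV].
  have nx : nbhs x (p @` U).
    by apply: open_nbhs_nbhs; split; [exact: popen|exists b0].
  have Kp : K (phi @^-1` (p @` U)) := phic _ nx.
  have := @filterI _ K KFF _ _ KA Kp => /filter_ex [y [Ay [b Ub pb]]].
  by exists (y, b); split => //; split; [exact: UV|].
- move=> S KS; exists (S, setT); first by split => //; exact: filterT.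
  by move=> q [].
- move=> V NV; exists (setT, V); first by split => //; exact: filterT.
  by move=> q [_ []].
- exists (setT, setT); first by split => //=; exact: filterT.
  by move=> q [_ []].
Qed.

Lemma cvg_by_refinement (Y Y' : Type) (Z : topologicalType) (F : set_system Y)
  (FF : Filter F) (pi : Y' -> Y) (f : Y -> Z) (z0 : Z) :
  (forall K : set_system Y, ProperFilter K -> (forall S, F S -> K S) ->
     exists K2 : set_system Y', [/\ ProperFilter K2,
       (forall S, K S -> K2 (pi @^-1` S)) & f (pi y) @[y --> K2] --> z0]) ->
  f y @[y --> F] --> z0.
Proof.
move=> H U Uz0; apply: contrapT => nFU.
pose K := within (fun y => ~ U (f y)) F.
have KP : ProperFilter K.
  have KF' : Filter K by apply: within_filter.
  apply: (@Build_ProperFilter _ K _ KF').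
  rewrite /K /within => K0; apply: nFU.
  apply: (@filterS _ _ FF _ _ _ K0) => y /= h; exact: contrapT.
have FK : forall S, F S -> K S.
  move=> S FS; rewrite /K /within.
  by apply: (@filterS _ _ FF _ _ _ FS) => y Sy _.
have [K2 [K2P K2K K2c]] := H K KP FK.
have h1 : K2 (pi @^-1` [set y | ~ U (f y)]).
  by apply: K2K; rewrite /K /within; apply: (@filterS _ _ FF _ _ _ (@filterT _ _ FF)) => y _.
have h2 := K2c U Uz0.
have K2F : Filter K2 := @filter_filter _ K2 K2P.
have /filter_ex [y [/= a b]] := @filterI _ K2 K2F _ _ h1 h2.
by apply: a.
Qed.

Lemma cvg_fst_app (W : Type) (K : set_system W) (FK : Filter K) (Y1 Y2 : topologicalType)
  (f : W -> Y1 * Y2) (y : Y1 * Y2) :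
  f w @[w --> K] --> y -> (f w).1 @[w --> K] --> y.1.
Proof.
move=> fc U hU; apply: (fc (fst @^-1` U)).
exact: (@cvg_fst _ _ (nbhs y.1) (nbhs y.2) _ U hU).
Qed.

Lemma cvg_snd_app (W : Type) (K : set_system W) (FK : Filter K) (Y1 Y2 : topologicalType)
  (f : W -> Y1 * Y2) (y : Y1 * Y2) :
  f w @[w --> K] --> y -> (f w).2 @[w --> K] --> y.2.
Proof.
move=> fc U hU; apply: (fc (snd @^-1` U)).
exact: (@cvg_snd _ _ (nbhs y.1) (nbhs y.2) _ U hU).
Qed.

Section Bundle.
Variables (R : realType) (X E : topologicalType) (p : E -> X) (z : X -> E)
  (add : E -> E -> E) (scal : R -> E -> E) (nrm : E -> R).
Hypothesis bb : banach_bundle p z add scal nrm.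

Definition bsub e e' := add e (scal (-1) e').

Lemma bVS e e' e'' : p e = p e' -> p e = p e'' ->
  [/\ add e e' = add e' e, add (add e e') e'' = add e (add e' e''),
      add e (z (p e)) = e, add e (scal (-1) e) = z (p e) &
      [/\ scal 1 e = e, (forall a b, scal a (scal b e) = scal (a * b) e),
          (forall a b, scal (a + b) e = add (scal a e) (scal b e)) &
          (forall a, scal a (add e e') = add (scal a e) (scal a e'))]].
Proof. by case: bb => _ _ _ VS _; exact: VS. Qed.

Lemma bpz x : p (z x) = x. Proof. by case: bb => _ [h _ _] *; exact: h. Qed.
Lemma bpadd e e' : p e = p e' -> p (add e e') = p e.
Proof. by case: bb => _ [_ h _] *; exact: h. Qed.
Lemma bpscal c e : p (scal c e) = p e.
Proof. by case: bb => _ [_ _ h] *; exact: h. Qed.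
Lemma bpsub e e' : p e = p e' -> p (bsub e e') = p e.
Proof. by move=> h; rewrite /bsub bpadd // bpscal. Qed.

Lemma baddC e e' : p e = p e' -> add e e' = add e' e.
Proof. by move=> h; case: (bVS h h). Qed.
Lemma baddA e e' e'' : p e = p e' -> p e = p e'' ->
  add (add e e') e'' = add e (add e' e'').
Proof. by move=> h1 h2; case: (bVS h1 h2). Qed.
Lemma badd0 e : add e (z (p e)) = e.
Proof. by case: (bVS (erefl (p e)) (erefl (p e))). Qed.
Lemma baddN e : add e (scal (-1) e) = z (p e).
Proof. by case: (bVS (erefl (p e)) (erefl (p e))). Qed.
Lemma bscal1 e : scal 1 e = e.
Proof. by case: (bVS (erefl (p e)) (erefl (p e))) => _ _ _ _ []. Qed.
Lemma bscalA a b e : scal a (scal b e) = scal (a * b) e.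
Proof. by case: (bVS (erefl (p e)) (erefl (p e))) => _ _ _ _ []. Qed.
Lemma bscalDl a b e : scal (a + b) e = add (scal a e) (scal b e).
Proof. by case: (bVS (erefl (p e)) (erefl (p e))) => _ _ _ _ []. Qed.
Lemma bscalDr a e e' : p e = p e' -> scal a (add e e') = add (scal a e) (scal a e').
Proof. by move=> h; case: (bVS h h) => _ _ _ _ []. Qed.

Lemma badd0l e : add (z (p e)) e = e.
Proof. by rewrite baddC ?badd0 // bpz. Qed.

Lemma bscal0 e : scal 0 e = z (p e).
Proof.
have h : scal 0 e = add (scal 0 e) (scal 0 e) by rewrite -bscalDl addr0.
set f := scal 0 e in h *.
have pf : p f = p e by rewrite /f bpscal.
rewrite -pf -(baddN f) {2}h baddA ?bpscal //.
by rewrite baddN badd0.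
Qed.

Lemma bnrm_scal c e : nrm (scal c e) = `|c| * nrm e.
Proof. by case: bb => _ _ _ _ [[_ h _] _ _]; exact: h. Qed.
Lemma bnrm_tri e e' : p e = p e' -> nrm (add e e') <= nrm e + nrm e'.
Proof. by case: bb => _ _ _ _ [[_ _ h] _ _]; exact: h. Qed.
Lemma bnrm_eq0 e : nrm e = 0 -> e = z (p e).
Proof. by case: bb => _ _ _ _ [[h _ _] _ _]; exact: h. Qed.

Lemma bnrm_z x : nrm (z x) = 0.
Proof.
have -> : z x = scal 0 (z x) by rewrite bscal0 bpz.
by rewrite bnrm_scal normr0 mul0r.
Qed.

Lemma bnrm_ge0 e : 0 <= nrm e.
Proof.
have h := bnrm_tri (esym (bpscal (-1) e)).
rewrite baddN bnrm_z bnrm_scal normrN normr1 mul1r in h.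
lra.
Qed.

Lemma bsubK e e' : p e = p e' -> add e' (bsub e e') = e.
Proof.
move=> h; rewrite /bsub -baddA ?bpscal //.
by rewrite (baddC (esym h)) baddA ?bpscal // baddN -h badd0.
Qed.

Lemma bsub_add a b : p a = p b -> bsub (add a b) b = a.
Proof.
move=> h; rewrite /bsub baddA ?bpscal //.
by rewrite baddN -h badd0.
Qed.

Lemma bsub_self e : bsub e e = z (p e).
Proof. exact: baddN. Qed.

Lemma bscal_sub k a b : p a = p b -> scal k (bsub a b) = bsub (scal k a) (scal k b).
Proof.
move=> h; rewrite /bsub bscalDr ?bpscal // !bscalA.
by rewrite mulrN1 mulN1r.
Qed.

Lemma bsubC a b : p a = p b -> bsub b a = scal (-1) (bsub a b).
Proof.
move=> h; rewrite bscal_sub // /bsub bscalA mulrN1 opprK bscal1.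
by rewrite baddC ?bpscal.
Qed.

Lemma bnrm_subC a b : p a = p b -> nrm (bsub a b) = nrm (bsub b a).
Proof. by move=> h; rewrite bsubC // bnrm_scal normrN normr1 mul1r. Qed.

Lemma bsub_eq0 a b : p a = p b -> nrm (bsub a b) = 0 -> a = b.
Proof.
move=> h /bnrm_eq0; rewrite bpsub // => e0.
by rewrite -{1}(bsubK h) e0 h badd0.
Qed.

Lemma bsub_split a b c : p a = p b -> p a = p c ->
  bsub a c = add (bsub a b) (bsub b c).
Proof.
move=> hab hac.
have pnb : p (scal (-1) b) = p a by rewrite bpscal.
have pnc : p (scal (-1) c) = p a by rewrite bpscal.
have pbc : p (add b (scal (-1) c)) = p a by rewrite bpadd -hab // pnc.
rewrite /bsub (baddA (e := a)) ?pnb ?pbc //.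
rewrite -(baddA (e := scal (-1) b)) ?pnb //.
rewrite (baddC (e := scal (-1) b)) ?pnb // baddN.
by rewrite -hab -pnc badd0l.
Qed.

Lemma bnrm_sub_tri a b c : p a = p b -> p a = p c ->
  nrm (bsub a c) <= nrm (bsub a b) + nrm (bsub b c).
Proof.
move=> hab hac; rewrite (bsub_split hab hac); apply: bnrm_tri.
by rewrite !bpsub // -hab.
Qed.

Lemma bcompl (x : X) (v : nat -> E) : (forall n, p (v n) = x) ->
  (forall eps : R, 0 < eps -> exists N : nat, forall n k : nat,
     (N <= n)%N -> (N <= k)%N -> nrm (bsub (v n) (v k)) < eps) ->
  exists e, p e = x /\ ((fun n => nrm (bsub (v n) e)) @ \oo --> (0 : R)).
Proof. by case: bb => _ _ _ _ [_ h _]; exact: h. Qed.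

Lemma ev_lt (f : nat -> R) eps : f n @[n --> \oo] --> (0:R) -> 0 < eps ->
  (forall n, 0 <= f n) -> exists N, forall n, (N <= n)%N -> f n < eps.
Proof.
move=> fc he f0.
have := (cvgrPdist_lt _ _).1 fc eps he => -[N _ HN].
exists N => n Hn; have := HN n Hn; rewrite /= sub0r normrN ger0_norm //.
Qed.

Lemma bfixpoint x (Phi : E -> E) :
  (forall w, p w = x -> p (Phi w) = x) ->
  (forall w w', p w = x -> p w' = x ->
     nrm (bsub (Phi w) (Phi w')) <= 2^-1 * nrm (bsub w w')) ->
  exists w, p w = x /\ Phi w = w.
Proof.
move=> pPhi contr.
pose v n := iter n Phi (z x).
have pv : forall n, p (v n) = x.
  by elim=> [|n IH]; [exact: bpz | rewrite /v /= pPhi].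
set d0 := nrm (bsub (v 1) (v 0)).
have d0ge : 0 <= d0 by exact: bnrm_ge0.
have dstep : forall n, nrm (bsub (v n.+1) (v n)) <= 2^-1 ^+ n * d0.
  elim=> [|n IH]; first by rewrite expr0 mul1r.
  apply: le_trans (contr (v n.+1) (v n) (pv _) (pv _)) _.
  rewrite exprS -mulrA; apply: ler_wpM2l => //; lra.
have dsum : forall n k, nrm (bsub (v (n + k)%N) (v n)) <= (2 - 2 * 2^-1 ^+ k) * (2^-1 ^+ n * d0).
  move=> n; elim=> [|k IH].
    by rewrite addn0 bsub_self bnrm_z expr0; lra.
  rewrite addnS.
  have h1 : p (v (n + k).+1) = p (v (n + k)) by rewrite !pv.
  have h2 : p (v (n + k).+1) = p (v n) by rewrite !pv.
  apply: le_trans (bnrm_sub_tri h1 h2) _.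
  apply: le_trans (lerD (dstep _) IH) _.
  rewrite exprD exprS.
  have -> : (2 - 2 * (2^-1 * 2^-1 ^+ k)) * (2^-1 ^+ n * d0) =
    2^-1 ^+ n * 2^-1 ^+ k * d0 + (2 - 2 * 2^-1 ^+ k) * (2^-1 ^+ n * d0) :> R.
    by field.
  by [].
have dsum' : forall n k, nrm (bsub (v (n + k)%N) (v n)) <= 2 * (2^-1 ^+ n * d0).
  move=> n k; apply: le_trans (dsum n k) _; apply: ler_wpM2r.
    by apply: mulr_ge0 => //; apply: exprn_ge0; lra.
  have : 0 <= 2^-1 ^+ k :> R by apply: exprn_ge0; lra.
  lra.
have hz : `|2^-1 : R| < 1 by rewrite ger0_norm; lra.
have : forall eps : R, 0 < eps -> exists N : nat, forall n k : nat,
     (N <= n)%N -> (N <= k)%N -> nrm (bsub (v n) (v k)) < eps.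
  move=> eps he.
  have he' : 0 < eps / (2 * d0 + 1) by apply: divr_gt0 => //; lra.
  have h2ge : forall n, 0 <= (2^-1:R)^+n by move=> n; apply: exprn_ge0; lra.
  have [N HN] := ev_lt (cvg_expr hz) he' h2ge.
  have key : forall n k, (N <= k)%N -> (k <= n)%N -> nrm (bsub (v n) (v k)) < eps.
    move=> n k Nk kn; rewrite -(subnKC kn).
    apply: le_lt_trans (dsum' _ _) _.
    have := HN k Nk => /= hk.
    have hne0 : 2 * d0 + 1 != 0 by apply/negP => /eqP; lra.
    have hee : eps / (2 * d0 + 1) * (2 * d0 + 1) = eps by field.
    have : 2^-1 ^+ k * d0 <= eps / (2 * d0 + 1) * d0 by apply: ler_wpM2r => //; exact: ltW.
    nra.
  exists N => n k Nn Nk; case: (leqP k n) => kn; first exact: key.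
  by rewrite bnrm_subC ?pv //; apply: key => //; apply: ltnW.
move=> /(bcompl pv) [e [pe ce]].
exists e; split => //.
apply: bsub_eq0; first by rewrite pPhi.
apply: contrapT => /eqP hne.
set delta := nrm (bsub (Phi e) e).
have dpos : 0 < delta by rewrite lt0r hne bnrm_ge0.
have hd3 : 0 < delta / 3 by apply: divr_gt0 => //; lra.
have [N HN] := ev_lt ce hd3 (fun n => bnrm_ge0 _).
have h1 : p (Phi e) = p (v N.+1) by rewrite !pv pPhi.
have h2 : p (Phi e) = p e by rewrite pPhi.
have := bnrm_sub_tri h1 h2.
have := contr e (v N) pe (pv N).
have := HN N (leqnn N); have := HN N.+1 (leqnSn N).
have hs : nrm (bsub e (v N)) = nrm (bsub (v N) e) by rewrite bnrm_subC ?pe ?pv.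
rewrite -/delta /= => ha hb hc hd.
have : 0 <= nrm (bsub (v N) e) by exact: bnrm_ge0.
lra.
Qed.
Lemma badd4 a b c d : p a = p b -> p a = p c -> p a = p d ->
  add (add a b) (add c d) = add (add a c) (add b d).
Proof.
move=> hb hc hd.
have pcd : p a = p (add c d) by rewrite bpadd -hc.
have pbd : p a = p (add b d) by rewrite bpadd -hb.
have hbc : p b = p c by rewrite -hb.
have hbd : p b = p d by rewrite -hb.
have hcb : p c = p b by rewrite -hb.
have hcd : p c = p d by rewrite -hc.
rewrite (baddA hb pcd) -(baddA hbc hbd) (baddC hbc) (baddA hcb hcd).
by rewrite -(baddA hc pbd).
Qed.

Lemma bneg_sub c d : p c = p d -> scal (-1) (bsub c d) = add (scal (-1) c) d.
Proof.
by move=> h; rewrite /bsub bscalDr ?bpscal // bscalA mulrN1 opprK bscal1.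
Qed.

Lemma bsub_sub e q : p e = p q -> bsub e (bsub e q) = q.
Proof.
move=> h; rewrite {1}/bsub bneg_sub // -baddA ?bpscal //.
by rewrite baddN h badd0l.
Qed.

Lemma bsub_addlr a b c d : p a = p b -> p a = p c -> p a = p d ->
  bsub (add a b) (add c d) = add (bsub a c) (bsub b d).
Proof.
move=> hb hc hd; rewrite /bsub bscalDr -?hc // badd4 //; by rewrite bpscal.
Qed.

Lemma bsub_subsub a b c d : p a = p b -> p a = p c -> p a = p d ->
  bsub (bsub a b) (bsub c d) = bsub (bsub a c) (bsub b d).
Proof.
move=> hb hc hd.
have hcd : p c = p d by rewrite -hc.
have hbd : p b = p d by rewrite -hb.
have e1 : bsub (bsub a b) (bsub c d) = add (bsub a b) (add (scal (-1) c) d).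
  by rewrite -bneg_sub.
have e2 : bsub (bsub a c) (bsub b d) = add (bsub a c) (add (scal (-1) b) d).
  by rewrite -bneg_sub.
rewrite e1 e2 /bsub badd4 //; by rewrite bpscal.
Qed.

Lemma bsub_addl z0 a b : p z0 = p a -> p z0 = p b ->
  bsub (add z0 a) (add z0 b) = bsub a b.
Proof.
move=> ha hb; rewrite bsub_addlr // bsub_self.
have pab : p (bsub a b) = p z0 by rewrite bpsub -ha.
by rewrite -pab badd0l.
Qed.

Lemma blin_sub (L : E -> E) x a b :
  (forall a b, p a = x -> p b = x -> L (add a b) = add (L a) (L b)) ->
  (forall k a, p a = x -> L (scal k a) = scal k (L a)) ->
  p a = x -> p b = x -> L (bsub a b) = bsub (L a) (L b).
Proof.
by move=> Ladd Lscal pa pb; rewrite /bsub Ladd ?bpscal // Lscal.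
Qed.

Section Cvg.
Variables (W : Type) (F : set_system W) (FF : ProperFilter F).
Let FF' : Filter F := @filter_filter _ F FF.

Lemma bcvg_add (f g : W -> E) a b : f w @[w --> F] --> a -> g w @[w --> F] --> b ->
  p a = p b -> (\forall w \near F, p (f w) = p (g w)) ->
  add (f w) (g w) @[w --> F] --> add a b.
Proof.
move=> fc gc pab hpe.
have hc : {within fibered p, continuous (fun ee : E * E => add ee.1 ee.2)}.
  by case: bb => _ _ [] *.
apply: (@cvg_within_app _ _ _ F FF' _ _ (fun w => (f w, g w)) (a, b) hc) => //.
exact: cvg_pair.
Qed.

Lemma bcvg_scal (f : W -> E) c a : f w @[w --> F] --> a ->
  scal c (f w) @[w --> F] --> scal c a.
Proof.
move=> fc.
have hc : continuous (fun ce : R * E => scal ce.1 ce.2) by case: bb => _ _ [] *.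
apply: (@cvg_cont_app _ _ _ F FF' _ (fun w => (c, f w)) (c, a) hc).
exact: (@cvg_pair _ _ _ F (nbhs c) (nbhs a) FF' _ _ (fun _ => c) f (@cvg_cst _ c _ F FF') fc).
Qed.

Lemma bcvg_sub (f g : W -> E) a b : f w @[w --> F] --> a -> g w @[w --> F] --> b ->
  p a = p b -> (\forall w \near F, p (f w) = p (g w)) ->
  bsub (f w) (g w) @[w --> F] --> bsub a b.
Proof.
move=> fc gc pab hpe; apply: bcvg_add => //; first exact: bcvg_scal.
  by rewrite bpscal.
by apply: filterS hpe => w ->; rewrite bpscal.
Qed.

Lemma bcvg_nrm (f : W -> E) a : f w @[w --> F] --> a -> nrm (f w) @[w --> F] --> nrm a.
Proof.
move=> fc; have hc : continuous nrm by case: bb => _ _ [] *.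
exact: (@cvg_cont_app _ _ _ F FF' _ _ _ hc fc).
Qed.

Lemma bfell (f : W -> E) x : p (f w) @[w --> F] --> x -> nrm (f w) @[w --> F] --> (0:R) ->
  f w @[w --> F] --> z x.
Proof.
move=> pc nc.
have hf : forall (G : set_system E) (x : X), ProperFilter G ->
         (p @ G --> x) -> (nrm @ G --> (0 : R)) -> (G --> z x).
  by case: bb => _ _ _ _ [_ _ h].
apply: (hf (f @ F)) => //; exact: fmap_proper_filter.
Qed.

End Cvg.

End Bundle.

Section Main.
Variables (R : realType) (G : ptopologicalType) (X A E : topologicalType)
  (s t : G -> X) (u : X -> G) (m : G -> G -> G) (i : G -> G)
  (pA : A -> X) (zA : X -> A) (addA : A -> A -> A) (scalA : R -> A -> A) (nA : A -> R)
  (mulA : A -> A -> A) (oneA : X -> A) (gact : G -> A -> A)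
  (pE : E -> X) (zE : X -> E) (addE : E -> E -> E) (scalE : R -> E -> E) (nE : E -> R)
  (act : A -> E -> E)
  (sigma : G -> G -> A) (T : G -> E -> E).
Hypothesis Hlc : locally_compact_groupoid R s t u m i.
Hypothesis HA : banach_algebra_bundle pA zA addA scalA nA mulA oneA.
Hypothesis Hg : algebra_G_action s t u m pA addA scalA nA mulA oneA gact.
Hypothesis HE : banach_module_bundle pA addA scalA nA mulA oneA pE zE addE scalE nE act.
Hypothesis Hs : multiplier s t u m pA mulA oneA gact sigma.
Hypothesis HT : pseudorepresentation s t pE addE scalE nE T.
Hypothesis Hl : A_linear s pA pE act gact T.
Hypothesis Hr : almost_sigma_rep s t u m i pA nA mulA oneA pE addE scalE nE act sigma T.

Notation subE := (bsub addE scalE).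
Notation subA := (bsub addA scalA).

Lemma bbE : banach_bundle pE zE addE scalE nE. Proof. by case: HE. Qed.
Lemma bbA : banach_bundle pA zA addA scalA nA. Proof. by case: HA. Qed.

Lemma Hgrp : is_topological_groupoid s t u m i. Proof. by case: Hlc. Qed.

Lemma s_u x : s (u x) = x. Proof. by case: Hgrp => [[h _] _ _ _ _]; case: (h x). Qed.
Lemma t_u x : t (u x) = x. Proof. by case: Hgrp => [[h _] _ _ _ _]; case: (h x). Qed.
Lemma s_m g h : s g = t h -> s (m g h) = s h.
Proof. by case: Hgrp => [[_ h'] _ _ _ _] e; case: (h' _ _ e). Qed.
Lemma t_m g h : s g = t h -> t (m g h) = t g.
Proof. by case: Hgrp => [[_ h'] _ _ _ _] e; case: (h' _ _ e). Qed.
Lemma m_assoc g h k : s g = t h -> s h = t k -> m (m g h) k = m g (m h k).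
Proof. by case: Hgrp => _ h' _ _ _; exact: h'. Qed.
Lemma m_u_l g : m (u (t g)) g = g. Proof. by case: Hgrp => _ _ h' _ _; case: (h' g). Qed.
Lemma m_u_r g : m g (u (s g)) = g. Proof. by case: Hgrp => _ _ h' _ _; case: (h' g). Qed.
Lemma s_i g : s (i g) = t g. Proof. by case: Hgrp => _ _ _ h' _; case: (h' g). Qed.
Lemma t_i g : t (i g) = s g. Proof. by case: Hgrp => _ _ _ h' _; case: (h' g). Qed.
Lemma m_i_r g : m g (i g) = u (t g). Proof. by case: Hgrp => _ _ _ h' _; case: (h' g). Qed.
Lemma m_i_l g : m (i g) g = u (s g). Proof. by case: Hgrp => _ _ _ h' _; case: (h' g). Qed.
Lemma s_cont : continuous s. Proof. by case: Hgrp => _ _ _ _ []. Qed.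
Lemma t_cont : continuous t. Proof. by case: Hgrp => _ _ _ _ []. Qed.
Lemma i_cont : continuous i. Proof. by case: Hgrp => _ _ _ _ []. Qed.

Lemma i_i g : i (i g) = g.
Proof.
have e1 : g = m g (m (i g) (i (i g))) by rewrite m_i_r t_i m_u_r.
have h1 : s g = t (i g) by rewrite t_i.
have h2 : s (i g) = t (i (i g)) by rewrite t_i.
have e2 : t g = t (i (i g)) by rewrite t_i s_i.
by rewrite {2}e1 -(m_assoc h1 h2) m_i_r [in u (t g)]e2 m_u_l.
Qed.

Lemma pmulA a b : pA a = pA b -> pA (mulA a b) = pA a.
Proof. by case: HA => _ [h _ _ _] *; exact: h. Qed.
Lemma poneA x : pA (oneA x) = x.
Proof. by case: HA => _ [_ h _ _] *; exact: h. Qed.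
Lemma oneA_cont : continuous oneA. Proof. by case: HA => _ [] *. Qed.
Lemma mulA_cont : {within fibered pA, continuous (fun ab => mulA ab.1 ab.2)}.
Proof. by case: HA => _ [] *. Qed.
Lemma mulA_distr a b c : pA a = pA b -> pA a = pA c ->
  [/\ mulA (addA a b) c = addA (mulA a c) (mulA b c),
      mulA a (addA b c) = addA (mulA a b) (mulA a c),
      (forall k, mulA (scalA k a) b = scalA k (mulA a b)),
      (forall k, mulA a (scalA k b) = scalA k (mulA a b)) &
      mulA (mulA a b) c = mulA a (mulA b c)].
Proof. by case: HA => _ _ h _ _; exact: h. Qed.
Lemma mulA1l a : mulA (oneA (pA a)) a = a. Proof. by case: HA => _ _ _ h _; case: (h a). Qed.
Lemma mulA1r a : mulA a (oneA (pA a)) = a. Proof. by case: HA => _ _ _ h _; case: (h a). Qed.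
Lemma nmulA a b : pA a = pA b -> nA (mulA a b) <= nA a * nA b.
Proof. by case: HA => _ _ _ _ [h _]; exact: h. Qed.

Lemma pact a e : pA a = pE e -> pE (act a e) = pE e.
Proof. by case: HE => _ h *; exact: h. Qed.
Lemma act_cont : {within [set ae | pA ae.1 = pE ae.2], continuous (fun ae => act ae.1 ae.2)}.
Proof. by case: HE. Qed.
Lemma act_lin a a' e e' : pA a = pE e -> pA a' = pE e -> pE e' = pE e ->
  [/\ act (addA a a') e = addE (act a e) (act a' e),
      act a (addE e e') = addE (act a e) (act a e'),
      (forall k, act (scalA k a) e = scalE k (act a e)),
      (forall k, act a (scalE k e) = scalE k (act a e)) &
      act (mulA a a') e = act a (act a' e)].
Proof. by case: HE => _ _ _ h _; exact: h. Qed.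
Lemma nact a e : pA a = pE e -> nE (act a e) <= nA a * nE e.
Proof. by case: HE => _ _ _ _ [h _]; exact: h. Qed.
Lemma act1 e : act (oneA (pE e)) e = e.
Proof. by case: HE => _ _ _ _ [_ h]; exact: h. Qed.

Lemma act_sub a e e' : pA a = pE e -> pE e' = pE e ->
  act a (subE e e') = subE (act a e) (act a e').
Proof.
move=> h1 h2.
have h3 : pE (scalE (-1) e') = pE e by rewrite (bpscal bbE) h2.
have h4 : pA a = pE e' by rewrite h2.
by case: (act_lin h1 h1 h3) => _ -> _ _ _; case: (act_lin h4 h4 (erefl _)) => _ _ _ -> _.
Qed.

Lemma act_mul a a' e : pA a = pE e -> pA a' = pE e ->
  act (mulA a a') e = act a (act a' e).
Proof. by move=> h1 h2; case: (act_lin h1 h2 (erefl _)). Qed.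

Lemma pgact g a : pA a = s g -> pA (gact g a) = t g.
Proof. by case: Hg => h *; exact: h. Qed.
Lemma gact_u a : gact (u (pA a)) a = a.
Proof. by case: Hg => _ _ _ _ [h _]; exact: h. Qed.
Lemma gact_m g h a : s g = t h -> pA a = s h -> gact (m g h) a = gact g (gact h a).
Proof. by case: Hg => _ _ _ _ [_ h']; exact: h'. Qed.

Lemma sig_cont : {within composable s t, continuous (fun gh => sigma gh.1 gh.2)}.
Proof. by case: Hs. Qed.
Lemma psig g h : s g = t h -> pA (sigma g h) = t g.
Proof. by case: Hs => _ H _ _ e; case: (H _ _ e). Qed.
Lemma sig_inv g h : s g = t h -> invertible pA mulA oneA (sigma g h).
Proof. by case: Hs => _ H _ _ e; case: (H _ _ e). Qed.

Lemma pT g e : pE e = s g -> pE (T g e) = t g.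
Proof. by case: HT => h *; exact: h. Qed.
Lemma T_add g e e' : pE e = s g -> pE e' = s g -> T g (addE e e') = addE (T g e) (T g e').
Proof. by case: HT => _ h *; exact: h. Qed.
Lemma T_scal g k e : pE e = s g -> T g (scalE k e) = scalE k (T g e).
Proof. by case: HT => _ _ h *; exact: h. Qed.
Lemma T_bd g : exists C : R, forall e, pE e = s g -> nE (T g e) <= C * nE e.
Proof. by case: HT => _ _ _ h _; exact: h. Qed.
Lemma T_cont : {within [set ge | s ge.1 = pE ge.2], continuous (fun ge => (ge.1, T ge.1 ge.2))}.
Proof. by case: HT. Qed.
Lemma T_sub g e e' : pE e = s g -> pE e' = s g -> T g (subE e e') = subE (T g e) (T g e').
Proof. by move=> h1 h2; apply: (blin_sub bbE (x := s g)) => // *; [exact: T_add|exact: T_scal]. Qed.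

Lemma opnorm_ge (x : X) (L : E -> E) e : pE e = x -> nE e <= 1 ->
  ((nE (L e))%:E <= opnorm pE nE x L)%E.
Proof. by move=> pe ne; apply: ereal_sup_ubound; exists e. Qed.

Lemma opnorm_ge0 x L : (0 <= opnorm pE nE x L)%E.
Proof.
apply: le_trans (opnorm_ge L (bpz bbE x) _); first by rewrite lee_fin (bnrm_ge0 bbE).
by rewrite (bnrm_z bbE).
Qed.

Lemma opnorm_le x (L : E -> E) a c : 0 <= a ->
  (a%:E * opnorm pE nE x L <= c%:E)%E ->
  (forall k e, pE e = x -> L (scalE k e) = scalE k (L e)) ->
  forall e, pE e = x -> a * nE (L e) <= c * nE e.
Proof.
move=> a0 hc Ll e pe.
have [n0|npos] := eqVneq (nE e) 0.
  have ez : e = scalE 0 e by rewrite (bscal0 bbE); exact: (bnrm_eq0 bbE n0).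
  by rewrite {1}ez Ll // (bnrm_scal bbE) normr0 !mul0r mulr0 n0 mulr0.
have ngt : 0 < nE e by rewrite lt0r npos (bnrm_ge0 bbE).
set e' := scalE (nE e)^-1 e.
have pe' : pE e' = x by rewrite (bpscal bbE).
have ne' : nE e' = 1.
  by rewrite (bnrm_scal bbE) ger0_norm ?invr_ge0 ?(bnrm_ge0 bbE) // mulVf.
have ne1 : nE e' <= 1 by rewrite ne'.
have h1 := opnorm_ge L pe' ne1.
have h2 : ((a * nE (L e'))%:E <= c%:E)%E.
  by apply: le_trans hc; rewrite EFinM; exact: lee_wpmul2l.
rewrite lee_fin /e' Ll // (bnrm_scal bbE) ger0_norm ?invr_ge0 ?(bnrm_ge0 bbE) // in h2.
have -> : a * nE (L e) = a * ((nE e)^-1 * nE (L e)) * nE e by field.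
by rewrite ler_pM2r.
Qed.

Definition S1 x := ereal_sup [set opnorm pE nE y (fun e => addE e (scalE (-1)%R (T (u y) e)))
              | y in Defs.orbit s t x].
Definition S2 x := ereal_sup [set ((ell i pA nA mulA oneA sigma gh.1)%:E *
                    opnorm pE nE (s gh.2)
                      (fun e => addE (act (sigma gh.1 gh.2) (T (m gh.1 gh.2) e))
                                     (scalE (-1)%R (T gh.1 (T gh.2 e)))))%E
              | gh in [set gh : G * G | Defs.orbit s t x (t gh.1) /\ t gh.2 = s gh.1]].
Lemma defectE x : defect s t u m i pA nA mulA oneA pE addE scalE nE act sigma T x =
  (S1 x + S2 x)%E.
Proof. by []. Qed.

Lemma orbit_refl x : Defs.orbit s t x x.
Proof. by exists (u x); rewrite s_u t_u. Qed.

Lemma ell_ge1 g : 1 <= ell i pA nA mulA oneA sigma g.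
Proof. by rewrite /ell le_max lexx. Qed.

Lemma S1_ge0 x : (0 <= S1 x)%E.
Proof.
apply: ereal_sup_ge.
exists (opnorm pE nE x (fun e => addE e (scalE (-1) (T (u x) e)))); last exact: opnorm_ge0.
by exists x => //; apply: orbit_refl.
Qed.

Lemma S2_ge0 x : (0 <= S2 x)%E.
Proof.
apply: ereal_sup_ge; eexists.
  by exists (u x, u x) => //=; split; [rewrite t_u; exact: orbit_refl | rewrite t_u s_u].
apply: mule_ge0; last exact: opnorm_ge0.
by rewrite lee_fin; apply: le_trans (ell_ge1 _).
Qed.

Lemma fin_of (e : \bar R) a : (0 <= e)%E -> (e <= a%:E)%E -> e = (fine e)%:E.
Proof. by case: e. Qed.

Definition r1 x := fine (S1 x).
Definition r2 x := fine (S2 x).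

Lemma S_bounds x : [/\ S1 x = (r1 x)%:E, S2 x = (r2 x)%:E, 0 <= r1 x, 0 <= r2 x &
  r1 x + r2 x <= 4^-1].
Proof.
have [hd _] := Hr x; rewrite defectE in hd.
have h1 : (S1 x <= (1/4 : R)%:E)%E by apply: le_trans hd; apply: leeDl; exact: S2_ge0.
have h2 : (S2 x <= (1/4 : R)%:E)%E by apply: le_trans hd; apply: leeDr; exact: S1_ge0.
have e1 := fin_of (S1_ge0 x) h1; have e2 := fin_of (S2_ge0 x) h2.
split => //.
- by rewrite -lee_fin -e1; exact: S1_ge0.
- by rewrite -lee_fin -e2; exact: S2_ge0.
- by rewrite -lee_fin EFinD -e1 -e2 mul1r in hd *.
Qed.

Lemma fine_defect x :
  fine (defect s t u m i pA nA mulA oneA pE addE scalE nE act sigma T x) = r1 x + r2 x.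
Proof. by case: (S_bounds x) => e1 e2 _ _ _; rewrite defectE e1 e2. Qed.

Lemma bnd1 x y e : Defs.orbit s t x y -> pE e = y -> nE (subE e (T (u y) e)) <= r1 x * nE e.
Proof.
move=> oxy pe.
have h : (1%:E * opnorm pE nE y (fun e => subE e (T (u y) e)) <= (r1 x)%:E)%E.
  case: (S_bounds x) => e1 _ _ _ _; rewrite mul1e -e1.
  by apply: ereal_sup_ubound; exists y.
have := opnorm_le ler01 h _ pe; rewrite mul1r; apply.
move=> k e0 pe0.
have ps : pE e0 = s (u y) by rewrite s_u.
rewrite T_scal // (bscal_sub bbE) // (pT ps) t_u //.
Qed.

Lemma bnd2 x h1 h2 e : Defs.orbit s t x (t h1) -> t h2 = s h1 -> pE e = s h2 ->
  ell i pA nA mulA oneA sigma h1 *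
    nE (subE (act (sigma h1 h2) (T (m h1 h2) e)) (T h1 (T h2 e))) <= r2 x * nE e.
Proof.
move=> ox th2 pe.
have h : ((ell i pA nA mulA oneA sigma h1)%:E * opnorm pE nE (s h2)
     (fun e => subE (act (sigma h1 h2) (T (m h1 h2) e)) (T h1 (T h2 e))) <= (r2 x)%:E)%E.
  case: (S_bounds x) => _ e2 _ _ _; rewrite -e2.
  by apply: ereal_sup_ubound; exists (h1, h2).
apply: (opnorm_le _ h) => //; first by apply: le_trans (ell_ge1 _).
move=> k e0 pe0.
have sh : s h1 = t h2 by [].
have pm : pE e0 = s (m h1 h2) by rewrite s_m.
have ph2 : pE (T h2 e0) = s h1 by rewrite pT.
have pTm : pA (sigma h1 h2) = pE (T (m h1 h2) e0) by rewrite psig // pT // t_m.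
rewrite (T_scal _ pm) (T_scal _ pe0) (T_scal _ ph2).
case: (act_lin pTm pTm (erefl _)) => _ _ _ -> _.
rewrite (bscal_sub bbE) //.
by rewrite pact // !pT // t_m.
Qed.

Definition cc g := ainv pA mulA oneA (sigma (i g) g).

Lemma cc_inv g : is_inverse pA mulA oneA (sigma (i g) g) (cc g).
Proof. by apply: xgetPex; apply: sig_inv; rewrite s_i. Qed.

Lemma psig_i g : pA (sigma (i g) g) = s g.
Proof. by rewrite psig ?s_i // t_i. Qed.

Lemma pcc g : pA (cc g) = s g.
Proof. by case: (cc_inv g) => -> _ _; exact: psig_i. Qed.

Lemma cc_sig g : mulA (cc g) (sigma (i g) g) = oneA (s g).
Proof. by case: (cc_inv g) => _ _ ->; rewrite psig_i. Qed.

Lemma ell_cc g : nA (cc g) <= ell i pA nA mulA oneA sigma (i g).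
Proof. by rewrite /ell i_i le_max lexx orbT. Qed.

Lemma nA_ge0 a : 0 <= nA a. Proof. exact: (bnrm_ge0 bbA). Qed.
Lemma nE_ge0 e : 0 <= nE e. Proof. exact: (bnrm_ge0 bbE). Qed.

Definition Q g w := act (cc g) (T (i g) (T g w)).

Lemma pTT g w : pE w = s g -> pE (T (i g) (T g w)) = s g.
Proof. by move=> pw; rewrite pT ?t_i // pT // s_i. Qed.

Lemma pQ g w : pE w = s g -> pE (Q g w) = s g.
Proof. by move=> pw; rewrite /Q pact pTT // pcc. Qed.

Definition rr x := r1 x + r2 x.

Lemma rr_bounds x : 0 <= rr x /\ rr x <= 4^-1.
Proof. by case: (S_bounds x) => _ _ h1 h2 h3; rewrite /rr; split => //; lra. Qed.

Lemma Q_bound g w : pE w = s g -> nE (subE w (Q g w)) <= rr (t g) * nE w.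
Proof.
move=> pw.
have oy : Defs.orbit s t (t g) (s g) by exists (i g); rewrite s_i t_i.
have h1 := bnd1 oy pw.
have okt : Defs.orbit s t (t g) (t (i g)) by exists (i g); rewrite s_i t_i.
have h2 := bnd2 okt (esym (s_i g)) pw.
rewrite m_i_l in h2.
set Y := subE (act (sigma (i g) g) (T (u (s g)) w)) (T (i g) (T g w)) in h2.
have pT1 : pE (T (u (s g)) w) = s g by rewrite pT ?s_u // t_u.
have pY1 : pE (act (sigma (i g) g) (T (u (s g)) w)) = s g by rewrite pact ?pT1 ?psig_i.
have eq : subE (T (u (s g)) w) (Q g w) = act (cc g) Y.
  rewrite /Y act_sub ?pcc ?pY1 ?pTT //.
  rewrite -act_mul ?pcc ?psig_i ?pT1 // cc_sig.
  by have := act1 (T (u (s g)) w); rewrite pT1 => ->.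
have h3 : nE (subE (T (u (s g)) w) (Q g w)) <= r2 (t g) * nE w.
  rewrite eq; apply: le_trans (nact _) _; first by rewrite (bpsub bbE) ?pY1 ?pTT ?pcc.
  apply: le_trans h2; apply: ler_wpM2r; first exact: nE_ge0.
  exact: ell_cc.
have := bnrm_sub_tri bbE (a := w) (b := T (u (s g)) w) (c := Q g w).
rewrite pT1 pQ // pw => /(_ erefl erefl) h4.
rewrite /rr mulrDl; apply: le_trans h4 _; exact: lerD.
Qed.

Lemma Q_lower g w : pE w = s g -> (1 - rr (t g)) * nE w <= nE (Q g w).
Proof.
move=> pw.
have e1 := bsubK bbE (e := w) (e' := Q g w).
rewrite pQ // pw in e1; have e2 := e1 erefl.
have := bnrm_tri bbE (e := Q g w) (e' := subE w (Q g w)).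
rewrite e2 (bpsub bbE) ?pQ // pw => /(_ erefl) h.
have := Q_bound pw; lra.
Qed.

Lemma nQ g w : pE w = s g -> nE (Q g w) <= nA (cc g) * nE (T (i g) (T g w)).
Proof. by move=> pw; apply: nact; rewrite pcc pTT. Qed.

Lemma T_zero g : T g (zE (s g)) = zE (t g).
Proof.
have ps : pE (zE (s g)) = s g by rewrite (bpz bbE).
rewrite -{1}(bpz bbE (s g)) -(bscal0 bbE) T_scal // (bscal0 bbE) pT //.
Qed.

Lemma Q_sub g w w' : pE w = s g -> pE w' = s g ->
  Q g (subE w w') = subE (Q g w) (Q g w').
Proof.
move=> pw pw'.
rewrite /Q T_sub // T_sub ?pT ?s_i // act_sub //.
- by rewrite pcc pTT.
- by rewrite !pTT.
Qed.

Lemma T_inj g w w' : pE w = s g -> pE w' = s g -> T g w = T g w' -> w = w'.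
Proof.
move=> pw pw' eT.
have pd : pE (subE w w') = s g by rewrite (bpsub bbE) // pw pw'.
have e1 : T g (subE w w') = zE (t g) by rewrite T_sub // eT (bsub_self bbE) pT.
have h1 := Q_lower pd; have h2 := nQ pd.
rewrite e1 -s_i T_zero (bnrm_z bbE) mulr0 in h2.
have h3 : nE (subE w w') = 0.
  have := nE_ge0 (subE w w'); have := rr_bounds (t g); nra.
by apply: (bsub_eq0 bbE); rewrite ?pw ?pw'.
Qed.

Lemma T_surj g z0 : pE z0 = t g -> exists y, pE y = s g /\ T g y = z0.
Proof.
move=> pz.
set k := i g.
have sk : s k = t g by rewrite s_i.
pose Phi w := addE z0 (subE w (Q k w)).
have pPhi : forall w, pE w = s k -> pE (Phi w) = s k.
  move=> w pw; rewrite /Phi (bpadd bbE) ?pz ?sk //.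
  by rewrite (bpsub bbE) ?pQ ?pw.
have contr : forall w w', pE w = s k -> pE w' = s k ->
    nE (subE (Phi w) (Phi w')) <= 2^-1 * nE (subE w w').
  move=> w w' pw pw'.
  have pd : pE (subE w w') = s k by rewrite (bpsub bbE) ?pw ?pw'.
  rewrite /Phi (bsub_addl bbE); first last.
  - by rewrite (bpsub bbE) ?pQ ?pw' ?pz ?sk.
  - by rewrite (bpsub bbE) ?pQ ?pw ?pz ?sk.
  rewrite (bsub_subsub bbE) ?pQ ?pw ?pw' // -Q_sub //.
  apply: le_trans (Q_bound pd) _.
  have := rr_bounds (t k); have := nE_ge0 (subE w w'); nra.
have [w [pw fw]] := bfixpoint bbE pPhi contr.
have eQ : Q k w = z0.
  have pq : pE w = pE (Q k w) by rewrite pQ.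
  rewrite -(bsub_sub bbE pq) -{1}fw /Phi (bsub_add bbE) //.
  by rewrite (bpsub bbE) // pz pw sk.
have pTk : pE (T k w) = s g by rewrite pT // /k t_i.
have pg : pA (gact k (cc k)) = s g by rewrite pgact ?pcc // /k t_i.
exists (act (gact k (cc k)) (T k w)); split; first by rewrite pact ?pTk ?pg.
rewrite Hl //.
rewrite -gact_m; first last.
- by rewrite pcc.
- by rewrite t_i.
rewrite m_i_r.
have -> : t g = pA (cc k) by rewrite pcc s_i.
by rewrite gact_u -eQ /Q /k i_i.
Qed.

Definition Tinv g e := xget (zE (s g)) [set w | pE w = s g /\ T g w = e].

Lemma Tinv_spec g e : pE e = t g -> pE (Tinv g e) = s g /\ T g (Tinv g e) = e.
Proof. by move=> pe; exact: (xgetPex (zE (s g)) (T_surj pe)). Qed.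

Lemma Tinv_T g e : pE e = s g -> Tinv g (T g e) = e.
Proof.
move=> pe; have [p1 p2] := Tinv_spec (pT pe).
exact: T_inj p1 pe p2.
Qed.

Lemma T_Tinv g e : pE e = t g -> T g (Tinv g e) = e.
Proof. by move=> pe; case: (Tinv_spec pe). Qed.

Lemma pTinv g e : pE e = t g -> pE (Tinv g e) = s g.
Proof. by move=> pe; case: (Tinv_spec pe). Qed.

Lemma Tinv_lower g e : pE e = t g ->
  (1 - rr (t g)) * nE (Tinv g e) <= nA (cc g) * nE (T (i g) e).
Proof.
move=> pe; have [p1 p2] := Tinv_spec pe.
by apply: le_trans (Q_lower p1) _; have := nQ p1; rewrite p2.
Qed.

Lemma Tinv_norm g e : pE e = t g ->
  nE (Tinv g e) <= (1 - rr (t g))^-1 *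
     (ell i pA nA mulA oneA sigma (i g) * nE (T (i g) e)).
Proof.
move=> pe.
have [r0 r4] := rr_bounds (t g).
have h : (1 - rr (t g)) * nE (Tinv g e) <=
    ell i pA nA mulA oneA sigma (i g) * nE (T (i g) e).
  apply: le_trans (Tinv_lower pe) _; apply: ler_wpM2r; [exact: nE_ge0|exact: ell_cc].
have hne : 1 - rr (t g) != 0 by apply/negP => /eqP; lra.
have -> : nE (Tinv g e) = (1 - rr (t g))^-1 * ((1 - rr (t g)) * nE (Tinv g e)) by field.
apply: ler_wpM2l => //; rewrite invr_ge0; lra.
Qed.

Lemma Tinv_add g e e' : pE e = t g -> pE e' = t g ->
  Tinv g (addE e e') = addE (Tinv g e) (Tinv g e').
Proof.
move=> pe pe'.
have pa : pE (addE e e') = t g by rewrite (bpadd bbE) // pe pe'.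
apply: (T_inj (g := g)); first exact: pTinv.
  by rewrite (bpadd bbE) !pTinv.
by rewrite T_add ?pTinv // !T_Tinv.
Qed.

Lemma Tinv_scal g k e : pE e = t g -> Tinv g (scalE k e) = scalE k (Tinv g e).
Proof.
move=> pe.
have pa : pE (scalE k e) = t g by rewrite (bpscal bbE).
apply: (T_inj (g := g)); first exact: pTinv.
  by rewrite (bpscal bbE) pTinv.
by rewrite T_scal ?pTinv // !T_Tinv.
Qed.

Lemma Tinv_bd g : exists C : R, forall e, pE e = t g -> nE (Tinv g e) <= C * nE e.
Proof.
have [C hC] := T_bd (i g).
exists ((1 - rr (t g))^-1 * (ell i pA nA mulA oneA sigma (i g) * C)) => e pe.
have [r0 r4] := rr_bounds (t g).
apply: le_trans (Tinv_norm pe) _; rewrite -mulrA -mulrA.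
apply: ler_wpM2l; first by rewrite invr_ge0; lra.
apply: ler_wpM2l; first by apply: le_trans (ell_ge1 _).
by apply: hC; rewrite s_i.
Qed.

Lemma Tinv_opnorm g :
  (opnorm pE nE (t g) (Tinv g)
   <= bound s t i pA nA mulA oneA pE nE sigma T (t g)
      * ((1 - fine (defect s t u m i pA nA mulA oneA pE addE scalE nE
                       act sigma T (t g)))^-1)%:E)%E.
Proof.
rewrite fine_defect -/(rr (t g)).
have [r0 r4] := rr_bounds (t g).
apply: ge_ereal_sup => _ [e [pe ne] <-].
have h1 : ((nE (Tinv g e))%:E <= ((ell i pA nA mulA oneA sigma (i g) * nE (T (i g) e))
     * (1 - rr (t g))^-1)%:E)%E by rewrite lee_fin mulrC; exact: Tinv_norm pe.
apply: le_trans h1 _; rewrite EFinM; apply: lee_wpmul2r.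
  by rewrite lee_fin invr_ge0; lra.
rewrite EFinM.
apply: (@le_trans _ _ ((ell i pA nA mulA oneA sigma (i g))%:E *
                        opnorm pE nE (s (i g)) (T (i g)))%E).
  apply: lee_wpmul2l; first by rewrite lee_fin; apply: le_trans (ell_ge1 _).
  by apply: opnorm_ge => //; rewrite s_i.
apply: ereal_sup_ubound; exists (i g) => //.
by exists (i g); rewrite s_i.
Qed.

Lemma sig_cc g : mulA (sigma (i g) g) (cc g) = oneA (s g).
Proof. by case: (cc_inv g) => _ -> _; rewrite psig_i. Qed.

Lemma cc_bound g a : pA a = s g ->
  nA (subA (oneA (s g)) (mulA (sigma (i g) g) a)) <= 2^-1 -> nA (cc g) <= 2 * nA a.
Proof.
move=> pa hY.
set XX := mulA (sigma (i g) g) a.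
set Y := subA (oneA (s g)) XX.
have pXX : pA XX = s g by rewrite /XX pmulA ?psig_i.
have pY : pA Y = s g by rewrite /Y (bpsub bbA) ?poneA ?pXX.
have e1 : addA XX Y = oneA (s g) by rewrite /Y (bsubK bbA) // poneA pXX.
have e2 : mulA (cc g) (oneA (s g)) = cc g by rewrite -{2}(mulA1r (cc g)) pcc.
have pcXX : pA (cc g) = pA XX by rewrite pcc pXX.
have pcY : pA (cc g) = pA Y by rewrite pcc pY.
have e3 : mulA (cc g) XX = a.
  have pcs : pA (cc g) = pA (sigma (i g) g) by rewrite pcc psig_i.
  have pca : pA (cc g) = pA a by rewrite pcc pa.
  case: (mulA_distr pcs pca) => _ _ _ _ <-.
  by rewrite cc_sig -pa mulA1l.
have hc : nA (cc g) <= nA a + nA (cc g) * nA Y.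
  rewrite -{1}e2 -e1.
  case: (mulA_distr pcXX pcY) => _ -> _ _ _.
  have pacY : pA a = pA (mulA (cc g) Y) by rewrite pmulA // pcc pa.
  rewrite e3; apply: le_trans (bnrm_tri bbA pacY) _.
  by apply: lerD => //; apply: nmulA.
have := nA_ge0 (cc g); have := nA_ge0 Y; nra.
Qed.

Lemma popE : forall U : set E, open U -> open (pE @` U).
Proof. by case: bbE => [[_ _ _ h] _ _ _ _]. Qed.
Lemma popA : forall U : set A, open U -> open (pA @` U).
Proof. by case: bbA => [[_ _ _ h] _ _ _ _]. Qed.

Lemma Tinv_cont : {within [set ge | t ge.1 = pE ge.2],
  continuous (fun ge => (ge.1, Tinv ge.1 ge.2))}.
Proof.
apply/subspace_continuousP => -[g0 z0] /= Dz.
set D := [set ge : G * E | t ge.1 = pE ge.2].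
set F := within D (nbhs (g0, z0)).
have FF : Filter F by apply: within_filter.
apply: cvg_pair.
  by apply: cvg_within_filter; exact: cvg_fst.
set f0 := Tinv g0 z0.
have pf0 : pE f0 = s g0 by exact: pTinv.
apply: (@cvg_by_refinement _ _ _ F FF (fun q : ((G * E) * A) * E => q.1.1)) => K KP FK.
have KF : Filter K := @filter_filter _ K KP.
have hF : forall V, nbhs (g0, z0) V -> K V.
  by move=> V hV; apply: FK; rewrite /F /within; apply: filterS hV => ? ? _.
have KD : K D by apply: FK; rewrite /F /within; apply: nearW.
have Kc : ge @[ge --> K] --> (g0, z0) by move=> V /hF.
have Kg : ge.1 @[ge --> K] --> g0 := cvg_fst_app KF Kc.
have Kz : ge.2 @[ge --> K] --> z0 := cvg_snd_app KF Kc.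
have Ks : s ge.1 @[ge --> K] --> s g0 := cvg_cont_app KF s_cont Kg.
have [K1 [K1P K1K K1c K1p]] := lift_filter popA KP Ks (pcc g0).
have K1F : Filter K1 := @filter_filter _ K1 K1P.
have K1s : s q.1.1 @[q --> K1] --> s g0 by move=> V /Ks /K1K.
have [K2 [K2P K2K K2c K2p]] := lift_filter popE K1P K1s pf0.
have K2F : Filter K2 := @filter_filter _ K2 K2P.
exists K2; split => //.
  by move=> S /K1K /K2K.
have tr0 : forall P, K P -> K2 [set q | P q.1.1] by move=> P /K1K /K2K.
have tr1 : forall P, K1 P -> K2 [set q | P q.1] by move=> P /K2K.
have cg : q.1.1.1 @[q --> K2] --> g0 by move=> V /Kg /tr0.
have cz : q.1.1.2 @[q --> K2] --> z0 by move=> V /Kz /tr0.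
have ca : q.1.2 @[q --> K2] --> cc g0 by move=> V /K1c /tr1.
have evD : K2 [set q | t q.1.1.1 = pE q.1.1.2] := tr0 _ KD.
have eva : K2 [set q | pA q.1.2 = s q.1.1.1] := tr1 _ K1p.
have evy : K2 [set q | pE q.2 = s q.1.1.1] := K2p.
have cy : q.2 @[q --> K2] --> f0 := K2c.
rewrite /= -/f0.
have cig : i q.1.1.1 @[q --> K2] --> i g0 := cvg_cont_app K2F i_cont cg.
have csig : sigma (i q.1.1.1) q.1.1.1 @[q --> K2] --> sigma (i g0) g0.
  apply: (@cvg_within_app _ _ _ K2 K2F (composable s t) (fun gh => sigma gh.1 gh.2)
     (fun q => (i q.1.1.1, q.1.1.1)) (i g0, g0) sig_cont).
  - exact: s_i.
  - exact: cvg_pair.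
  - by apply: nearW => q; exact: s_i.
have cX : mulA (sigma (i q.1.1.1) q.1.1.1) q.1.2 @[q --> K2] --> oneA (s g0).
  rewrite -sig_cc.
  apply: (@cvg_within_app _ _ _ K2 K2F (fibered pA) (fun ab => mulA ab.1 ab.2)
     (fun q => (sigma (i q.1.1.1) q.1.1.1, q.1.2)) (sigma (i g0) g0, cc g0) mulA_cont).
  - by rewrite /fibered /= psig_i pcc.
  - exact: cvg_pair.
  - by apply: filterS eva => q /= h; rewrite /fibered /= psig_i h.
have cs : s q.1.1.1 @[q --> K2] --> s g0 := cvg_cont_app K2F s_cont cg.
have cone : oneA (s q.1.1.1) @[q --> K2] --> oneA (s g0) := cvg_cont_app K2F oneA_cont cs.
have cY : subA (oneA (s q.1.1.1)) (mulA (sigma (i q.1.1.1) q.1.1.1) q.1.2)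
            @[q --> K2] --> zA (s g0).
  have := bcvg_sub bbA K2P cone cX erefl.
  rewrite (bsub_self bbA) poneA; apply.
  by apply: filterS eva => q /= h; rewrite poneA pmulA ?psig_i // h.
have cnY := bcvg_nrm bbA K2P cY; rewrite (bnrm_z bbA) in cnY.
have cna := bcvg_nrm bbA K2P ca.
have ev1 : K2 [set q | nA (subA (oneA (s q.1.1.1)) (mulA (sigma (i q.1.1.1) q.1.1.1) q.1.2)) < 2^-1].
  have h2 : (0:R) < 2^-1 by rewrite invr_gt0.
  apply: filterS ((cvgrPdist_lt _ _).1 cnY _ h2) => q /=.
  by rewrite sub0r normrN ger0_norm //; exact: nA_ge0.
have ev2 : K2 [set q | nA q.1.2 < nA (cc g0) + 1].
  apply: filterS ((cvgrPdist_lt _ _).1 cna _ ltr01) => q /=.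
  by move/ltr_normlP => [h1 h2]; lra.
have cTy : T q.1.1.1 q.2 @[q --> K2] --> z0.
  have cT2 : (q.1.1.1, T q.1.1.1 q.2) @[q --> K2] --> (g0, T g0 f0).
    apply: (@cvg_within_app _ _ _ K2 K2F [set ge | s ge.1 = pE ge.2]
     (fun ge => (ge.1, T ge.1 ge.2)) (fun q => (q.1.1.1, q.2)) (g0, f0) T_cont).
    - exact: (esym pf0).
    - exact: cvg_pair.
    - by apply: filterS evy => q /= h; rewrite h.
  have := cvg_snd_app K2F cT2; rewrite /= /f0 T_Tinv //.
have evTy : K2 [set q | pE q.1.1.2 = pE (T q.1.1.1 q.2)].
  by apply: filterS2 evD evy => q /= h1 h2; rewrite pT // h1.
have cv : subE q.1.1.2 (T q.1.1.1 q.2) @[q --> K2] --> zE (t g0).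
  have := bcvg_sub bbE K2P cz cTy erefl evTy.
  by rewrite (bsub_self bbE) -Dz.
have cTv : T (i q.1.1.1) (subE q.1.1.2 (T q.1.1.1 q.2)) @[q --> K2] --> zE (t (i g0)).
  have cT2 : (i q.1.1.1, T (i q.1.1.1) (subE q.1.1.2 (T q.1.1.1 q.2))) @[q --> K2]
      --> (i g0, T (i g0) (zE (t g0))).
    apply: (@cvg_within_app _ _ _ K2 K2F [set ge | s ge.1 = pE ge.2]
     (fun ge => (ge.1, T ge.1 ge.2)) (fun q => (i q.1.1.1, subE q.1.1.2 (T q.1.1.1 q.2)))
     (i g0, zE (t g0)) T_cont).
    - by rewrite /= (bpz bbE) s_i.
    - exact: cvg_pair.
    - apply: filterS2 evD evTy => q /= h1 h2.
      by rewrite (bpsub bbE) // s_i h1.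
  have := cvg_snd_app K2F cT2; rewrite /=.
  by rewrite -{1}(s_i g0) T_zero.
have cnTv := bcvg_nrm bbE K2P cTv; rewrite (bnrm_z bbE) in cnTv.
pose M := 4 * (nA (cc g0) + 1).
have evb : K2 [set q | 0 <= nE (subE (Tinv q.1.1.1 q.1.1.2) q.2) <=
    M * nE (T (i q.1.1.1) (subE q.1.1.2 (T q.1.1.1 q.2)))].
  have H12 := @filterI _ K2 K2F _ _ ev1 ev2.
  have H34 := @filterI _ K2 K2F _ _ evD evy.
  have H345 := @filterI _ K2 K2F _ _ H34 eva.
  apply: filterS2 H12 H345 => q [h1 h2] [[hD hy] ha].
  rewrite /= nE_ge0 /=.
  set g := q.1.1.1 in h1 h2 hD hy ha *.
  have pTi : pE (Tinv g q.1.1.2) = s g by apply: pTinv; rewrite hD.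
  have pw : pE (subE (Tinv g q.1.1.2) q.2) = s g by rewrite (bpsub bbE) // pTi hy.
  have Tw : T g (subE (Tinv g q.1.1.2) q.2) = subE q.1.1.2 (T g q.2).
    by rewrite T_sub // T_Tinv // hD.
  have hq1 := Q_lower pw; have hq2 := nQ pw; rewrite Tw in hq2.
  have hc := cc_bound ha (ltW h1).
  have [r0 r4] := rr_bounds (t g).
  set N := nE (T (i g) (subE q.1.1.2 (T g q.2))) in hq2 *.
  set W := nE (subE (Tinv g q.1.1.2) q.2) in hq1 *.
  have N0 : 0 <= N by exact: nE_ge0.
  have W0 : 0 <= W by exact: nE_ge0.
  have a0 := nA_ge0 q.1.2.
  have c0 := nA_ge0 (cc g).
  have e1 : nA (cc g) * N <= 2 * nA q.1.2 * N by apply: ler_wpM2r.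
  have e2 : nA q.1.2 * N <= (nA (cc g0) + 1) * N by apply: ler_wpM2r => //; exact: ltW.
  have e3 : 3 / 4 * W <= (1 - rr (t g)) * W by apply: ler_wpM2r => //; lra.
  rewrite /M; nra.
have cnw : nE (subE (Tinv q.1.1.1 q.1.1.2) q.2) @[q --> K2] --> (0:R).
  apply: (squeeze_cvgr evb); first exact: cvg_cst.
  by rewrite -(mulr0 M); apply: cvgMr.
have evpw : K2 [set q | s q.1.1.1 = pE (subE (Tinv q.1.1.1 q.1.1.2) q.2)].
  apply: filterS2 evD evy => q /= h1 h2.
  by rewrite (bpsub bbE) pTinv // h1.
have cpw : pE (subE (Tinv q.1.1.1 q.1.1.2) q.2) @[q --> K2] --> s g0.
  exact: cvg_trans (near_eq_cvg evpw) cs.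
have cw := bfell bbE K2P cpw cnw.
have cadd : addE q.2 (subE (Tinv q.1.1.1 q.1.1.2) q.2) @[q --> K2] --> f0.
  have := bcvg_add bbE K2P cy cw.
  rewrite (bpz bbE) pf0 => /(_ erefl); rewrite -pf0 (badd0 bbE); apply.
  apply: filterS2 evD evy => q /= h1 h2.
  by rewrite (bpsub bbE) pTinv // h1.
apply: cvg_trans _ cadd; apply: near_eq_cvg.
apply: filterS2 evD evy => q /= h1 h2.
by rewrite (bsubK bbE) // pTinv // h1.
Qed.

Lemma main_sec : exists Tinv : G -> E -> E,
    [/\ (forall g e, pE e = s g -> Tinv g (T g e) = e),
        (forall g e, pE e = t g -> T g (Tinv g e) = e),
        pullback_morphism t s pE addE scalE nE Tinv &
        (forall g : G,
           (opnorm pE nE (t g) (Tinv g)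
            <= bound s t i pA nA mulA oneA pE nE sigma T (t g)
               * ((1 - fine (defect s t u m i pA nA mulA oneA pE addE scalE nE
                                act sigma T (t g)))^-1)%:E)%E)].
Proof.
exists Tinv; split.
- exact: Tinv_T.
- exact: T_Tinv.
- split.
  + exact: pTinv.
  + exact: Tinv_add.
  + exact: Tinv_scal.
  + exact: Tinv_bd.
  + exact: Tinv_cont.
- exact: Tinv_opnorm.
Qed.

End Main.

Unset Implicit Arguments.

Theorem mainTheorem3 (R : realType) (G : ptopologicalType) (X A E : topologicalType)
  (s t : G -> X) (u : X -> G) (m : G -> G -> G) (i : G -> G)
  (pA : A -> X) (zA : X -> A) (addA : A -> A -> A) (scalA : R -> A -> A) (nA : A -> R)
  (mulA : A -> A -> A) (oneA : X -> A) (gact : G -> A -> A)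
  (pE : E -> X) (zE : X -> E) (addE : E -> E -> E) (scalE : R -> E -> E) (nE : E -> R)
  (act : A -> E -> E)
  (sigma : G -> G -> A) (T : G -> E -> E) :
  locally_compact_groupoid R s t u m i ->
  banach_algebra_bundle pA zA addA scalA nA mulA oneA ->
  algebra_G_action s t u m pA addA scalA nA mulA oneA gact ->
  banach_module_bundle pA addA scalA nA mulA oneA pE zE addE scalE nE act ->
  multiplier s t u m pA mulA oneA gact sigma ->
  pseudorepresentation s t pE addE scalE nE T ->
  A_linear s pA pE act gact T ->
  almost_sigma_rep s t u m i pA nA mulA oneA pE addE scalE nE act sigma T ->
  exists Tinv : G -> E -> E,
    [/\ (forall g e, pE e = s g -> Tinv g (T g e) = e),
        (forall g e, pE e = t g -> T g (Tinv g e) = e),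
        pullback_morphism t s pE addE scalE nE Tinv &
        (forall g : G,
           (opnorm pE nE (t g) (Tinv g)
            <= bound s t i pA nA mulA oneA pE nE sigma T (t g)
               * ((1 - fine (defect s t u m i pA nA mulA oneA pE addE scalE nE
                                act sigma T (t g)))^-1)%:E)%E)].
Proof.
move=> H1 H2 H3 H4 H5 H6 H7 H8.
exact: (main_sec H1 H2 H3 H4 H5 H6 H7 H8).
Qed.
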